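(* Let $q\ge 2$ and let $f$ be a $q$-regular sequence with a zero-insensitive linear representation $(\mathbf{u},(M_i)_{0\le i<q},\mathbf{v})$, so that $f(n)=\mathbf{u}^t M_{n_0}M_{n_1}\cdots M_{n_L}\mathbf{v}$ where $n_L\cdots n_0$ is the $q$-ary expansion of $n$. Let $U$ be the smallest vector space such that every vector of the form $\mathbf{u}^t\prod_{i\in I}M_{n_i}$ (for a finite index set $I$ and digits $n_i\in\{0,\dots,q-1\}$) lies in the affine subspace $\mathbf{u}^t+U^t$, where $U^t=\{\mathbf{x}^t:\mathbf{x}\in U\}$; let $V$ be the smallest vector space such that every vector of the form $\prod_{j\in J}M_{n_j}\mathbf{v}$ lies in $\mathbf{v}+V$. Let $r$ be a nonnegative integer. Then $f$ is $q$-quasiadditive with parameter $r$ (i.e. $f(q^{k+r}a+b)=f(a)+f(b)$ for all nonnegative integers $a,b,k$ with $0\le b<q^k$) if and only if all of the following hold: (1) $\mathbf{u}^t\mathbf{v}=0$; (2) $\mathbf{x}^t(M_0^r-I)\mathbf{v}=0$ for all $\mathbf{x}\in U$; (3) $\mathbf{u}^t(M_0^r-I)\mathbf{y}=0$ for all $\mathbf{y}\in V$; (4) $\mathbf{x}^tM_0^r\mathbf{y}=0$ for all $\mathbf{x}\in U$ and $\mathbf{y}\in V$.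
   Context: A function $f$ on the nonnegative integers is $q$-regular if $f(n)=\mathbf{u}^t\mathbf{f}(n)$ for a vector $\mathbf{u}$ and a vector-valued function $\mathbf{f}$ for which there are square matrices $M_0,\dots,M_{q-1}$ with $\mathbf{f}(qn+i)=M_i\mathbf{f}(n)$ for all $0\le i<q$ and $qn+i>0$; set $\mathbf{v}=\mathbf{f}(0)$. Equivalently $f(n)=\mathbf{u}^t M_{n_0}M_{n_1}\cdots M_{n_L}\mathbf{v}$ for the $q$-ary expansion $n_L\cdots n_0$ of $n$. The triple $(\mathbf{u},(M_i)_{0\le i<q},\mathbf{v})$ is a linear representation of $f$; it is zero-insensitive if $M_0\mathbf{v}=\mathbf{v}$. $I$ denotes the identity matrix. *)

(* Defs.v *)
From HB Require Import structures.
From mathcomp Require Import all_boot all_order all_algebra.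
Set Implicit Arguments. Unset Strict Implicit. Unset Printing Implicit Defensive.
Import Order.TTheory GRing.Theory Num.Theory.
Local Open Scope ring_scope.

(* q-ary digits of n, least significant first: [:: n_0; n_1; ...; n_L];
   the expansion of 0 is empty.  Fuel n suffices when q >= 2. *)
Fixpoint digits_fuel (q fuel n : nat) : seq nat :=
  match fuel with
  | 0 => [::]
  | fuel'.+1 => if n == 0%N then [::] else (n %% q)%N :: digits_fuel q fuel' (n %/ q)
  end.
Definition digits (q n : nat) : seq nat := digits_fuel q n n.

Definition wprod (K : fieldType) (d : nat) (M : nat -> 'M[K]_d) (w : seq nat) : 'M[K]_d :=
  foldr (fun i A => M i *m A) 1%:M w.

Definition qword (q : nat) (w : seq nat) : bool := all (fun i => (i < q)%N) w.

(* x^t in U^t, U the smallest subspace with u^t W in u^t + U^t for all words W: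
   x lies in every subspace (row space of a d x d matrix) containing all
   u^t W - u^t. *)
Definition inU (K : fieldType) (d q : nat) (M : nat -> 'M[K]_d) (u : 'rV[K]_d)
  (x : 'rV[K]_d) : Prop :=
  forall S : 'M[K]_d,
    (forall w, qword q w -> (u *m wprod M w - u <= S)%MS) -> (x <= S)%MS.

Definition inV (K : fieldType) (d q : nat) (M : nat -> 'M[K]_d) (v : 'cV[K]_d)
  (y : 'cV[K]_d) : Prop :=
  forall S : 'M[K]_d,
    (forall w, qword q w -> ((wprod M w *m v - v)^T <= S)%MS) -> (y^T <= S)%MS.

Definition quasiadditive (K : fieldType) (q r : nat) (f : nat -> K) : Prop :=
  forall a b k : nat, (b < q ^ k)%N -> f (q ^ (k + r) * a + b)%N = f a + f b.

(* Main.v *)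
Require Import Defs.
From HB Require Import structures.
From mathcomp Require Import all_boot all_order all_algebra.
From mathcomp Require Import zify.
Set Implicit Arguments. Unset Strict Implicit.
Import Order.TTheory GRing.Theory Num.Theory.
Local Open Scope ring_scope.

Fixpoint num (q : nat) (w : seq nat) : nat :=
  if w is i :: w' then (i + q * num q w')%N else 0%N.

Fixpoint word (q k b : nat) : seq nat :=
  if k is k'.+1 then (b %% q)%N :: word q k' (b %/ q) else [::].

Lemma num_cat q w1 w2 : num q (w1 ++ w2) = (num q w1 + q ^ size w1 * num q w2)%N.
Proof.
elim: w1 => [|i w1 IH] /=; first by rewrite expn0 mul1n.
by rewrite IH expnS mulnDr mulnA addnA.
Qed.

Lemma num_nseq0 q r : num q (nseq r 0%N) = 0%N.
Proof. by elim: r => //= r ->; rewrite muln0. Qed.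

Lemma num_lt q w : qword q w -> (num q w < q ^ size w)%N.
Proof.
elim: w => [|i w IH] /=; first by rewrite expn0.
move=> /andP [hi hw]; have := IH hw; rewrite expnS.
move: (q ^ size w)%N => p hn; nia.
Qed.

Lemma word_size q k b : size (word q k b) = k.
Proof. by elim: k b => //= k IH b; rewrite IH. Qed.

Lemma word_q q k b : (0 < q)%N -> qword q (word q k b).
Proof. move=> hq; elim: k b => //= k IH b; by rewrite ltn_pmod // IH. Qed.

Lemma word_num q k b : (0 < q)%N -> (b < q ^ k)%N -> num q (word q k b) = b.
Proof.
move=> hq; elim: k b => [|k IH] b /=; first by rewrite expn0; case: b.
move=> hb; rewrite IH; last by rewrite ltn_divLR // -expnSr.
by rewrite mulnC addnC -divn_eq.
Qed.

Lemma df_eq q : (2 <= q)%N -> forall f1 f2 n, (n <= f1)%N -> (n <= f2)%N ->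
  digits_fuel q f1 n = digits_fuel q f2 n.
Proof.
move=> hq; elim=> [|f1 IH] f2 n h1 h2.
  by move: h1 h2; rewrite leqn0 => /eqP ->; case: f2.
move: h2; case: f2 => [|f2] h2; first by move: h2; rewrite leqn0 => /eqP -> .
rewrite /=; case: eqP => // /eqP hn; congr (_ :: _); apply: IH.
  have : (n %/ q < n)%N by apply: ltn_Pdiv; lia.
  lia.
have : (n %/ q < n)%N by apply: ltn_Pdiv; lia.
lia.
Qed.

Lemma digits_S q n : (2 <= q)%N -> (0 < n)%N ->
  digits q n = (n %% q)%N :: digits q (n %/ q).
Proof.
move=> hq hn; rewrite /digits; case: n hn => // n _ /=.
congr (_ :: _); apply: df_eq => //.
have : (n.+1 %/ q < n.+1)%N by apply: ltn_Pdiv; lia.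
lia.
Qed.

Section Main.
Variables (K : fieldType) (q d r : nat) (u : 'rV[K]_d) (M : nat -> 'M[K]_d) (v : 'cV[K]_d).
Hypothesis hq : (2 <= q)%N.
Hypothesis hv : M 0%N *m v = v.

Lemma wprod_cat w1 w2 : wprod M (w1 ++ w2) = wprod M w1 *m wprod M w2.
Proof.
elim: w1 => [|i w1 IH] /=; first by rewrite mul1mx.
by rewrite /wprod /= -/(wprod M (w1 ++ w2)) IH mulmxA.
Qed.

Lemma wprod_nseq0 n : wprod M (nseq n 0%N) = M 0%N ^+ n.
Proof.
elim: n => [|n IH] /=; first by rewrite expr0.
by rewrite /wprod /= -/(wprod M (nseq n 0%N)) IH exprS mulmxE.
Qed.

Lemma powv n : M 0%N ^+ n *m v = v.
Proof.
elim: n => [|n IH]; first by rewrite expr0 mul1mx.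
by rewrite exprS -mulmxE -mulmxA IH hv.
Qed.

Lemma wdig w : qword q w -> wprod M (digits q (num q w)) *m v = wprod M w *m v.
Proof.
elim: w => [|i w IH] //= /andP [hi hw].
have hq0 : (0 < q)%N by lia.
case: (posnP (i + q * num q w)) => h0.
  have hi0 : i = 0%N by lia.
  have hn0 : num q w = 0%N by nia.
  rewrite h0 /wprod /= -/(wprod M w) -mulmxA -IH // hn0 /= mul1mx.
  by rewrite hi0 hv.
rewrite digits_S //.
have -> : ((i + q * num q w) %% q = i)%N.
  by rewrite addnC mulnC modnMDl modn_small.
have -> : ((i + q * num q w) %/ q = num q w)%N.
  by rewrite addnC mulnC divnMDl // divn_small // addn0.
by rewrite /wprod /= -/(wprod M w) -/(wprod M (digits q (num q w))) -!mulmxA IH.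
Qed.

Lemma m11 (A B : 'M[K]_1) : A 0 0 = B 0 0 -> A = B.
Proof. by move=> h; apply/matrixP => i j; rewrite !ord1. Qed.

Lemma addE (A B : 'M[K]_1) : (A + B) 0 0 = A 0 0 + B 0 0.
Proof. by rewrite mxE. Qed.

Lemma qcat w1 w2 : qword q w1 -> qword q w2 -> qword q (w1 ++ nseq r 0%N ++ w2).
Proof.
move=> h1 h2; rewrite /qword !all_cat; apply/and3P; split => //.
by apply/allP => x /nseqP [-> _]; lia.
Qed.

Lemma numcat w1 w2 :
  num q (w1 ++ nseq r 0%N ++ w2) = (q ^ (size w1 + r) * num q w2 + num q w1)%N.
Proof.
by rewrite !num_cat num_nseq0 size_nseq add0n expnD mulnA addnC.
Qed.

Variable f : nat -> K.
Hypothesis hf : forall n : nat, f n = (u *m wprod M (digits q n) *m v) 0 0.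

Lemma fnum w : qword q w -> f (num q w) = (u *m wprod M w *m v) 0 0.
Proof. by move=> hw; rewrite hf -!mulmxA wdig. Qed.

Lemma fcat w1 w2 : qword q w1 -> qword q w2 ->
  f (num q (w1 ++ nseq r 0%N ++ w2)) =
  (u *m wprod M w1 *m M 0%N ^+ r *m wprod M w2 *m v) 0 0.
Proof.
move=> h1 h2; rewrite fnum ?qcat // !wprod_cat wprod_nseq0.
by rewrite !mulmxA.
Qed.

Definition KEY := forall w1 w2, qword q w1 -> qword q w2 ->
  u *m wprod M w1 *m M 0%N ^+ r *m wprod M w2 *m v =
  u *m wprod M w1 *m v + u *m wprod M w2 *m v.

Lemma qa_key : quasiadditive q r f -> u *m v = 0 /\ KEY.
Proof.
move=> H; split.
  have := H 0%N 0%N 0%N isT; rewrite muln0 addn0 => h.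
  have h0 : f 0%N = 0 by apply: (@addrI _ (f 0%N)); rewrite addr0 -h.
  apply: m11; move: h0; rewrite hf /= /wprod /= mulmx1 => ->.
  by rewrite mxE.
move=> w1 w2 h1 h2; apply: m11.
have := H (num q w2) (num q w1) (size w1) (num_lt h1).
rewrite -numcat fcat // => ->.
by rewrite !fnum // addE addrC.
Qed.

Lemma key_qa : u *m v = 0 -> KEY -> quasiadditive q r f.
Proof.
move=> huv HK a b k hb.
have hq0 : (0 < q)%N by lia.
have ha : (a < q ^ a)%N by apply: ltn_expl.
set wb := word q k b; set wa := word q a a.
have hwb : qword q wb by apply: word_q.
have hwa : qword q wa by apply: word_q.
have -> : (q ^ (k + r) * a + b = num q (wb ++ nseq r 0%N ++ wa))%N.
  by rewrite numcat /wb /wa !word_num // word_size.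
rewrite fcat // HK // addE.
by rewrite -(fnum hwa) -(fnum hwb) /wa /wb !word_num // addrC.
Qed.

End Main.

Theorem theorem9 (K : fieldType) (q d r : nat) (u : 'rV[K]_d)
  (M : nat -> 'M[K]_d) (v : 'cV[K]_d) (f : nat -> K) :
  (2 <= q)%N ->
  M 0%N *m v = v ->
  (forall n : nat, f n = (u *m wprod M (digits q n) *m v) 0 0) ->
  quasiadditive q r f <->
  [/\ u *m v = 0,
      (forall x, inU q M u x -> x *m (M 0%N ^+ r - 1%:M) *m v = 0),
      (forall y, inV q M v y -> u *m (M 0%N ^+ r - 1%:M) *m y = 0) &
      (forall x y, inU q M u x -> inV q M v y -> x *m M 0%N ^+ r *m y = 0)].
Proof.
move=> hq hv hf.
have P1 : forall n, M 0%N ^+ n *m v = v by apply: powv.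
have W0 : wprod M [::] = 1%:M by [].
split.
- move=> H; have [huv HK] := qa_key hq hv hf H.
  have K1 : forall w', qword q w' -> u *m (M 0%N ^+ r - 1%:M) *m (wprod M w' *m v - v) = 0.
    move=> w' hw; have := HK [::] w' isT hw; rewrite W0 mulmx1 huv add0r => e.
    rewrite (mulmxBr u) mulmx1 mulmxBl !mulmxBr !mulmxA e -(mulmxA u (M 0%N ^+ r) v) P1 huv.
    by rewrite !subr0 subrr.
  have K2 : forall w w', qword q w -> qword q w' ->
      (u *m wprod M w - u) *m M 0%N ^+ r *m (wprod M w' *m v - v) = 0.
    move=> w w' hw hw'.
    have e1 := HK w w' hw hw'.
    have e2 := HK w [::] hw isT. have e3 := HK [::] w' isT hw'.
    rewrite W0 !mulmx1 huv addr0 in e2 e3; rewrite add0r in e3.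
    rewrite !mulmxBl !mulmxBr ?mulmxA e1 e2 e3 -(mulmxA u (M 0%N ^+ r) v) P1 huv subr0. by rewrite addrAC addrK subrr.
  split => //.
  + by move=> x _; rewrite -mulmxA mulmxBl P1 mul1mx subrr mulmx0.
  + move=> y hy.
    have : (y^T <= kermx ((u *m (M 0%N ^+ r - 1%:M))^T))%MS.
      apply: hy => w hw; apply/sub_kermxP.
      by rewrite -trmx_mul K1 // trmx0.
    move/sub_kermxP; rewrite -trmx_mul => /eqP; rewrite trmx_eq0 => /eqP.
    done.
  + move=> x y hx hy.
    have K3 : forall w', qword q w' -> x *m M 0%N ^+ r *m (wprod M w' *m v - v) = 0.
      move=> w' hw'.
      have : (x <= kermx (M 0%N ^+ r *m (wprod M w' *m v - v)))%MS.
        apply: hx => w hw; apply/sub_kermxP.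
        by rewrite mulmxA K2.
      by move/sub_kermxP; rewrite mulmxA.
    have : (y^T <= kermx ((x *m M 0%N ^+ r)^T))%MS.
      apply: hy => w hw; apply/sub_kermxP.
      by rewrite -trmx_mul K3 // trmx0.
    move/sub_kermxP; rewrite -trmx_mul => /eqP; rewrite trmx_eq0 => /eqP.
    done.
- case=> huv _ h3 h4; apply: (key_qa hq hv hf huv) => w w' hw hw'.
  have hx : inU q M u (u *m wprod M w - u) by move=> S hS; apply: hS.
  have hy : inV q M v (wprod M w' *m v - v) by move=> S hS; apply: hS.
  have e4 := h4 _ _ hx hy. have e3 := h3 _ hy.
  move: e3; rewrite (mulmxBr u) mulmx1 !mulmxBl !mulmxBr ?mulmxA.
  rewrite -(mulmxA u (M 0%N ^+ r) v) P1 huv !subr0 => /eqP; rewrite subr_eq0 => /eqP e3.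
  move: e4; rewrite !mulmxBl !mulmxBr ?mulmxA e3.
  rewrite -(mulmxA u (M 0%N ^+ r) v) -(mulmxA (u *m wprod M w) (M 0%N ^+ r) v) !P1 huv subr0.
  rewrite ?mulmxA => /eqP; rewrite subr_eq0 subr_eq => /eqP ->.
  by rewrite addrC.
Qed.
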